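(* Let $A=\bigsqcup_{n\in\omega}A_n$ where each $A_n$ is a set equipped with a total order $<_n$ order-isomorphic to $(\mathbb{Z},<)$, and for $a\in A_n$ let $s(a)$ be the immediate successor of $a$ in $(A_n,<_n)$. Let $J=A\times\{0,1\}$ and consider the free monoid on the alphabet $J^{\pm1}=\{(a,i),(a,i)^{-1}: a\in A, i\in\{0,1\}\}$ with empty word $e$. Let $\mathcal{R}$ be the rewriting system with, for every $a\in A$, the rules (i) $(a,0)(a,0)^{-1}\mapsto e$; (ii) $(a,0)^{-1}(a,0)\mapsto e$; (iii) $(a,1)(a,1)^{-1}\mapsto e$; (iv) $(a,1)^{-1}(a,1)\mapsto e$; (v) $(s(a),0)(a,1)\mapsto (s(a),1)^{-1}(s(a),0)$; (vi) $(s(a),0)(a,1)^{-1}\mapsto (s(a),1)(s(a),0)$; (vii) $(s(a),0)^{-1}(s(a),1)\mapsto (a,1)^{-1}(s(a),0)^{-1}$; (viii) $(s(a),0)^{-1}(s(a),1)^{-1}\mapsto (a,1)(s(a),0)^{-1}$. Then $\mathcal{R}$ is terminating and locally confluent (hence confluent), so every equivalence class of $\leftrightarrow_{\mathcal{R}}^*$ contains a unique terminus. Moreover every terminus is a freely reduced word, and the set $R$ of termini is a set of normal forms for the group $\mathcal{G}=F(J)/\langle\langle\{(s(a),0)(a,1)(s(a),0)^{-1}(s(a),1)\}_{a\in A}\rangle\rangle$: each element of $\mathcal{G}$ is represented by exactly one word in $R$.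
   Context: Work in $\mathsf{ZFC}$. For a rewriting system $\mathcal{R}$ (a set of pairs of words) on a free monoid, $w_0\to_{\mathcal{R}}w_1$ means $w_0\equiv v_0v_1v_2$, $w_1\equiv v_0v_1'v_2$ with $(v_1,v_1')\in\mathcal{R}$; $\to^*_{\mathcal{R}}$ is its transitive closure and $\leftrightarrow^*_{\mathcal{R}}$ the generated equivalence relation. $\mathcal{R}$ is terminating if there is no infinite chain $w_0\to_{\mathcal{R}}w_1\to_{\mathcal{R}}\cdots$; locally confluent if whenever $w_0\to_{\mathcal{R}}w_1$ and $w_0\to_{\mathcal{R}}w_2$ there is $w_3$ with $w_1\to^*_{\mathcal{R}}w_3$ and $w_2\to^*_{\mathcal{R}}w_3$; confluent is the same with $\to^*_{\mathcal{R}}$ in the hypotheses. A terminus is a word $w$ such that no rule applies to it. $F(J)$ is the free group on $J$, and $\langle\langle X\rangle\rangle$ the normal closure. *)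

(* Defs.v *)
From Stdlib Require Import List ZArith Relations.
Import ListNotations.
Open Scope Z_scope.

Section Defs.
Variable A : Type.

(* A letter of J^{±1}: ((a, i), sign) with i : bool (false = 0, true = 1)
   and sign = true for (a,i), sign = false for (a,i)^{-1}. *)
Definition letter := ((A * bool) * bool)%type.
Definition word := list letter.
Definition pos (a : A) (i : bool) : letter := ((a, i), true).
Definition neg (a : A) (i : bool) : letter := ((a, i), false).
Definition linv (x : letter) : letter := (fst x, negb (snd x)).

(* A = disjoint union of blocks A_n (n = blk a), ordered by lt within a block. *)
Definition is_succ (blk : A -> nat) (lt : A -> A -> Prop) (a b : A) : Prop :=
  blk b = blk a /\ lt a b /\
  ~ (exists c, blk c = blk a /\ lt a c /\ lt c b).

Definition blocks_Z (blk : A -> nat) (lt : A -> A -> Prop) : Prop :=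
  forall n : nat, exists f : Z -> A,
    (forall z, blk (f z) = n) /\
    (forall a, blk a = n -> exists z, f z = a) /\
    (forall z1 z2, lt (f z1) (f z2) <-> z1 < z2).

Inductive rule (blk : A -> nat) (lt : A -> A -> Prop) : word -> word -> Prop :=
| r1 a : rule blk lt [pos a false; neg a false] []
| r2 a : rule blk lt [neg a false; pos a false] []
| r3 a : rule blk lt [pos a true; neg a true] []
| r4 a : rule blk lt [neg a true; pos a true] []
| r5 a b : is_succ blk lt a b ->
    rule blk lt [pos b false; pos a true] [neg b true; pos b false]
| r6 a b : is_succ blk lt a b ->
    rule blk lt [pos b false; neg a true] [pos b true; pos b false]
| r7 a b : is_succ blk lt a b ->
    rule blk lt [neg b false; pos b true] [neg a true; neg b false]
| r8 a b : is_succ blk lt a b ->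
    rule blk lt [neg b false; neg b true] [pos a true; neg b false].

Definition step (Rl : word -> word -> Prop) (w0 w1 : word) : Prop :=
  exists v0 v1 v1' v2, w0 = v0 ++ v1 ++ v2 /\ w1 = v0 ++ v1' ++ v2 /\ Rl v1 v1'.

Definition steps (Rl : word -> word -> Prop) := clos_refl_trans word (step Rl).
Definition conv (Rl : word -> word -> Prop) := clos_refl_sym_trans word (step Rl).

Definition terminating (Rl : word -> word -> Prop) : Prop :=
  ~ exists f : nat -> word, forall n, step Rl (f n) (f (S n)).

Definition locally_confluent (Rl : word -> word -> Prop) : Prop :=
  forall w0 w1 w2, step Rl w0 w1 -> step Rl w0 w2 ->
    exists w3, steps Rl w1 w3 /\ steps Rl w2 w3.

Definition confluent (Rl : word -> word -> Prop) : Prop :=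
  forall w0 w1 w2, steps Rl w0 w1 -> steps Rl w0 w2 ->
    exists w3, steps Rl w1 w3 /\ steps Rl w2 w3.

Definition terminus (Rl : word -> word -> Prop) (w : word) : Prop :=
  ~ exists w', step Rl w w'.

Definition freely_reduced (w : word) : Prop :=
  ~ exists u v x, w = u ++ [x; linv x] ++ v.

(* The group G = F(J) / <<relators>>: two words represent the same element
   iff they are related by the congruence on the free monoid generated by
   x x^{-1} = e (free reduction) and r = e for each relator r. *)
Inductive group_rel (blk : A -> nat) (lt : A -> A -> Prop) : word -> word -> Prop :=
| gr_free x : group_rel blk lt [x; linv x] []
| gr_rel a b : is_succ blk lt a b ->
    group_rel blk lt [pos b false; pos a true; neg b false; pos b true] [].

Definition same_in_G (blk : A -> nat) (lt : A -> A -> Prop) : word -> word -> Prop :=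
  clos_refl_sym_trans word (step (group_rel blk lt)).

End Defs.
Arguments pos {A}. Arguments neg {A}. Arguments linv {A}. Arguments is_succ {A}. Arguments blocks_Z {A}. Arguments rule {A}. Arguments step {A}. Arguments steps {A}. Arguments conv {A}. Arguments terminating {A}. Arguments locally_confluent {A}. Arguments confluent {A}. Arguments terminus {A}. Arguments freely_reduced {A}. Arguments group_rel {A}. Arguments same_in_G {A}.

(* Main.v *)
Require Import Defs.
From Stdlib Require Import List ZArith Relations Lia Classical.
Import ListNotations.

Lemma pred_uniq {A} {blk : A -> nat} {lt} (HZ : blocks_Z blk lt) a a' b :
  is_succ blk lt a b -> is_succ blk lt a' b -> a = a'.
Proof.
  intros [Hb [Hab Hn]] [Hb' [Hab' Hn']].
  destruct (HZ (blk b)) as [f [Hf1 [Hf2 Hf3]]].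
  destruct (Hf2 a (eq_sym Hb)) as [za Ea].
  destruct (Hf2 a' (eq_sym Hb')) as [za' Ea'].
  destruct (Hf2 b eq_refl) as [zb Eb]. subst.
  apply Hf3 in Hab. apply Hf3 in Hab'.
  destruct (Z.lt_trichotomy za za') as [H|[H|H]].
  - exfalso; apply Hn. exists (f za'). split; [congruence|]. split; apply Hf3; lia.
  - subst; reflexivity.
  - exfalso; apply Hn'. exists (f za). split; [congruence|]. split; apply Hf3; lia.
Qed.

Lemma rule_det {A} {blk : A -> nat} {lt} (HZ : blocks_Z blk lt) l r r' :
  rule blk lt l r -> rule blk lt l r' -> r = r'.
Proof.
  intros H H'. inversion H; subst; inversion H'; subst; try reflexivity;
  repeat match goal with
  | H1 : is_succ _ _ ?a ?b, H2 : is_succ _ _ ?c ?b |- _ =>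
      assert (a = c) by (eapply pred_uniq; eauto); subst c; clear H2
  end; reflexivity.
Qed.

Lemma rule_lhs {A} {blk : A -> nat} {lt} l r :
  rule blk lt l r -> exists p q, l = [p; q].
Proof. intros H; inversion H; eauto. Qed.

Lemma step_head {A} (R : word A -> word A -> Prop) p q v r :
  R [p; q] r -> step R (p :: q :: v) (r ++ v).
Proof. intros H. exists [], [p;q], r, v. simpl. auto. Qed.

Lemma step_cons {A} (R : word A -> word A -> Prop) c w w' :
  step R w w' -> step R (c :: w) (c :: w').
Proof. intros (v0 & v1 & v1' & v2 & E1 & E2 & H). exists (c::v0), v1, v1', v2.
  subst; auto. Qed.

Lemma step_ctx {A} (R : word A -> word A -> Prop) u w w' v :
  step R w w' -> step R (u ++ w ++ v) (u ++ w' ++ v).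
Proof. intros (v0 & v1 & v1' & v2 & E1 & E2 & H). exists (u++v0), v1, v1', (v2 ++ v).
  subst; repeat rewrite <- app_assoc; auto. Qed.

Lemma steps_ctx {A} (R : word A -> word A -> Prop) u w w' v :
  steps R w w' -> steps R (u ++ w ++ v) (u ++ w' ++ v).
Proof. induction 1. apply rt_step; apply step_ctx; auto. apply rt_refl. eapply rt_trans; eauto. Qed.

Lemma steps_cons {A} (R : word A -> word A -> Prop) c w w' :
  steps R w w' -> steps R (c :: w) (c :: w').
Proof. intros H; apply (steps_ctx R [c] w w' []) in H. simpl in H; rewrite !app_nil_r in H; auto. Qed.

Lemma steps_app {A} (R : word A -> word A -> Prop) w w' v :
  steps R w w' -> steps R (w ++ v) (w' ++ v).
Proof. intros H; apply (steps_ctx R [] w w' v) in H. auto. Qed.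

Lemma step_inv {A} {blk : A -> nat} {lt} w w' : step (rule blk lt) w w' ->
  (exists p q v r, w = p::q::v /\ w' = r ++ v /\ rule blk lt [p;q] r) \/
  (exists c u u', w = c::u /\ w' = c::u' /\ step (rule blk lt) u u').
Proof.
  intros (v0 & v1 & v1' & v2 & E1 & E2 & H).
  destruct (rule_lhs _ _ H) as (p & q & ->).
  destruct v0 as [|c v0].
  - left. exists p, q, v2, v1'. auto.
  - right. exists c, (v0 ++ [p;q] ++ v2), (v0 ++ v1' ++ v2). simpl in *. subst.
    split; auto. split; auto. exists v0, [p;q], v1', v2; auto.
Qed.

Ltac rule_tac := first [apply r1 | apply r2 | apply r3 | apply r4
  | (eapply r5; eassumption) | (eapply r6; eassumption)
  | (eapply r7; eassumption) | (eapply r8; eassumption)].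
Ltac fstep := cbn [app]; first [ eapply step_head; rule_tac | apply step_cons; fstep ].
Ltac norm := repeat (eapply rt_trans; [apply rt_step; fstep | ]); apply rt_refl.

Lemma crit {A} {blk : A -> nat} {lt} p q t r r2 :
  rule blk lt [p;q] r -> rule blk lt [q;t] r2 ->
  exists z, steps (rule blk lt) (r ++ [t]) z /\ steps (rule blk lt) (p :: r2) z.
Proof.
  intros H1 H2. inversion H1; subst; inversion H2; subst;
  eexists; split; unfold steps; norm.
Qed.
Open Scope nat_scope.

Lemma head_vs {A} {blk : A -> nat} {lt} p q v r u' :
  rule blk lt [p;q] r -> step (rule blk lt) (q::v) u' ->
  exists z, steps (rule blk lt) (r ++ v) z /\ steps (rule blk lt) (p :: u') z.
Proof.
  intros H1 H2. destruct (step_inv _ _ H2) as [(q' & t & v' & r2 & E1 & E2 & H3)|(c & u & u2 & E1 & E2 & H3)].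
  - injection E1; intros; subst.
    destruct (crit _ _ _ _ _ H1 H3) as (z & Z1 & Z2).
    exists (z ++ v'). split.
    + replace (r ++ t :: v') with ((r ++ [t]) ++ v') by (rewrite <- app_assoc; reflexivity).
      apply steps_app; auto.
    + apply (steps_app _ _ _ v') in Z2. simpl in Z2. auto.
  - injection E1; intros; subst.
    exists (r ++ u2). split.
    + pose proof (steps_ctx _ r u u2 [] (rt_step _ _ _ _ H3)) as H4. rewrite !app_nil_r in H4. auto.
    + apply rt_step. apply step_head. auto.
Qed.

Lemma loc_conf {A} {blk : A -> nat} {lt} (HZ : blocks_Z blk lt) :
  locally_confluent (rule blk lt).
Proof.
  intros w0. induction w0 as [|c w IH]; intros w1 w2 S1 S2.
  - destruct S1 as (v0 & v1 & v1' & v2 & E & _ & H). destruct (rule_lhs _ _ H) as (p&q&->).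
    destruct v0; discriminate.
  - destruct (step_inv _ _ S1) as [(p & q & v & r & E1 & E2 & H1)|(c1 & u & u1 & E1 & E2 & H1)];
    destruct (step_inv _ _ S2) as [(p' & q' & v' & r' & F1 & F2 & H2)|(c2 & u' & u2 & F1 & F2 & H2)];
    subst.
    + rewrite E1 in F1. injection F1; intros; subst.
      rewrite (rule_det HZ _ _ _ H1 H2). eexists; split; apply rt_refl.
    + rewrite E1 in F1. injection F1; intros; subst. eapply head_vs; eauto.
    + rewrite E1 in F1. injection F1; intros; subst. destruct (head_vs _ _ _ _ _ H2 H1) as (z & Z1 & Z2).
      eauto.
    + injection E1; intros; subst. injection F1; intros; subst. destruct (IH _ _ H1 H2) as (z & Z1 & Z2).
      exists (c2 :: z); split; apply steps_cons; auto.
Qed.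

Fixpoint cy {A} (w : word A) : nat :=
  match w with [] => 0 | c :: w' => (if snd (fst c) then 1 else 0) + cy w' end.
Fixpoint inv {A} (w : word A) : nat :=
  match w with [] => 0 | c :: w' => (if snd (fst c) then 0 else cy w') + inv w' end.
Definition meas {A} (w : word A) : nat := (length w + inv w)%nat.

Lemma step_meas {A} {blk : A -> nat} {lt} w w' : step (rule blk lt) w w' ->
  meas w' < meas w /\ cy w' <= cy w.
Proof.
  unfold meas. revert w'; induction w as [|c w IH]; intros w' S.
  - destruct S as (v0 & v1 & v1' & v2 & E & _ & H). destruct (rule_lhs _ _ H) as (p&q&->).
    destruct v0; discriminate.
  - destruct (step_inv _ _ S) as [(p & q & v & r & E1 & E2 & H1)|(c1 & u & u1 & E1 & E2 & H1)].
    + injection E1; intros; subst. inversion H1; subst; simpl; lia.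
    + injection E1; intros; subst. destruct (IH _ H1). simpl. destruct (snd (fst c1)); lia.
Qed.

Lemma term {A} {blk : A -> nat} {lt} : terminating (rule blk lt).
Proof.
  intros [f Hf].
  assert (forall n, meas (f n) + n <= meas (f 0)).
  { induction n. lia. destruct (step_meas _ _ (Hf n)). lia. }
  specialize (H (S (meas (f 0)))). lia.
Qed.

Lemma nf_exists {A} {blk : A -> nat} {lt} w : exists r, steps (rule blk lt) w r /\ terminus (rule blk lt) r.
Proof.
  remember (meas w) as n. revert w Heqn. induction n as [n IH] using lt_wf_ind. intros w En.
  destruct (classic (exists w', step (rule blk lt) w w')) as [[w' S]|N].
  - destruct (IH (meas w') ltac:(destruct (step_meas _ _ S); lia) w' eq_refl) as (r & R1 & R2).
    exists r; split; auto. eapply rt_trans; [apply rt_step|]; eauto.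
  - exists w; split; [apply rt_refl|exact N].
Qed.

Lemma newman {A} {blk : A -> nat} {lt} (HZ : blocks_Z blk lt) : confluent (rule blk lt).
Proof.
  intros w0. remember (meas w0) as n. revert w0 Heqn. induction n as [n IH] using lt_wf_ind.
  intros w0 En w1 w2 S1 S2.
  apply clos_rt_rt1n in S1. apply clos_rt_rt1n in S2.
  destruct S1 as [|y1 w1x T1 S1]. { exists w2; split; [apply clos_rt1n_rt; auto|apply rt_refl]. }
  destruct S2 as [|y2 w2x T2 S2]. { exists w1x; split; [apply rt_refl|]. apply clos_rt1n_rt. econstructor; eauto. }
  apply clos_rt1n_rt in S1. apply clos_rt1n_rt in S2.
  destruct (loc_conf HZ _ _ _ T1 T2) as (v & V1 & V2).
  destruct (IH (meas y1) ltac:(destruct (step_meas _ _ T1); lia) y1 eq_refl _ _ S1 V1) as (z1 & Z1 & Z1').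
  destruct (IH (meas y2) ltac:(destruct (step_meas _ _ T2); lia) y2 eq_refl w2x z1 S2 (rt_trans _ _ _ _ _ V2 Z1')) as (z2 & Z2 & Z2').
  exists z2; split; auto. eapply rt_trans; eauto.
Qed.

Lemma conv_join {A} {blk : A -> nat} {lt} (HZ : blocks_Z blk lt) w w' :
  conv (rule blk lt) w w' -> exists z, steps (rule blk lt) w z /\ steps (rule blk lt) w' z.
Proof.
  induction 1.
  - exists y; split; [apply rt_step; auto|apply rt_refl].
  - exists x; split; apply rt_refl.
  - destruct IHclos_refl_sym_trans as (z & ?&?); eauto.
  - destruct IHclos_refl_sym_trans1 as (z1 & ?&?). destruct IHclos_refl_sym_trans2 as (z2 & ?&?).
    destruct (newman HZ y z1 z2) as (z3 & ?&?); auto.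
    exists z3; split; eapply rt_trans; eauto.
Qed.

Lemma steps_term {A} {blk : A -> nat} {lt} r z : terminus (rule blk lt) r -> steps (rule blk lt) r z -> z = r.
Proof.
  intros T S. apply clos_rt_rt1n in S. destruct S; auto. exfalso; apply T; eauto.
Qed.

Lemma steps_conv {A} (R : word A -> word A -> Prop) w z : steps R w z -> conv R w z.
Proof. induction 1. apply rst_step; auto. apply rst_refl. eapply rst_trans; eauto. Qed.

Lemma unique_nf {A} {blk : A -> nat} {lt} (HZ : blocks_Z blk lt) w :
  exists r, conv (rule blk lt) w r /\ terminus (rule blk lt) r /\
      forall r', conv (rule blk lt) w r' -> terminus (rule blk lt) r' -> r' = r.
Proof.
  destruct (nf_exists (blk:=blk) (lt:=lt) w) as (r & S & T).
  exists r; split; [apply steps_conv; auto|]. split; auto.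
  intros r' C T'. destruct (conv_join HZ r r') as (z & Z1 & Z2).
  - apply rst_trans with w; auto. apply rst_sym; apply steps_conv; auto.
  - rewrite <- (steps_term _ _ T Z1). symmetry. apply (steps_term _ _ T' Z2).
Qed.

Lemma term_fr {A} {blk : A -> nat} {lt} w : terminus (rule blk lt) w -> freely_reduced w.
Proof.
  intros T (u & v & x & E). apply T. destruct x as [[a i] s].
  exists (u ++ v). exists u, [((a,i),s); linv ((a,i),s)], [], v. split; auto. split; auto.
  destruct i, s; simpl; constructor.
Qed.

Lemma rst_ctx {A} (R : word A -> word A -> Prop) u w w' v :
  clos_refl_sym_trans _ (step R) w w' -> clos_refl_sym_trans _ (step R) (u ++ w ++ v) (u ++ w' ++ v).
Proof. induction 1. apply rst_step; apply step_ctx; auto. apply rst_refl.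
  apply rst_sym; auto. eapply rst_trans; eauto. Qed.

Lemma rst_lift {A} (R1 R2 : word A -> word A -> Prop) :
  (forall l r, R1 l r -> clos_refl_sym_trans _ (step R2) l r) ->
  forall w w', clos_refl_sym_trans _ (step R1) w w' -> clos_refl_sym_trans _ (step R2) w w'.
Proof.
  intros H w w'. induction 1.
  - destruct H0 as (v0 & v1 & v1' & v2 & -> & -> & H1). apply rst_ctx; auto.
  - apply rst_refl.
  - apply rst_sym; auto.
  - eapply rst_trans; eauto.
Qed.

Lemma sx {A} (R : word A -> word A -> Prop) u l r v w w' :
  R l r -> w = u ++ l ++ v -> w' = u ++ r ++ v -> clos_refl_sym_trans _ (step R) w w'.
Proof. intros H -> ->. apply rst_step. exists u, l, r, v; auto. Qed.

Lemma rule_G {A} {blk : A -> nat} {lt} l r : rule blk lt l r -> same_in_G blk lt l r.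
Proof.
  unfold same_in_G. intros H; inversion H; subst.
  - apply (sx _ [] _ [] [] _ _ (gr_free _ _ _ (pos a false))); reflexivity.
  - apply (sx _ [] _ [] [] _ _ (gr_free _ _ _ (neg a false))); reflexivity.
  - apply (sx _ [] _ [] [] _ _ (gr_free _ _ _ (pos a true))); reflexivity.
  - apply (sx _ [] _ [] [] _ _ (gr_free _ _ _ (neg a true))); reflexivity.
  -
    eapply rst_trans. apply rst_sym.
    apply (sx _ [pos b false; pos a true] _ [] [] _ _ (gr_free _ _ _ (neg b false))); reflexivity.
    eapply rst_trans. apply rst_sym.
    apply (sx _ [pos b false; pos a true; neg b false] _ [] [pos b false] _ _ (gr_free _ _ _ (pos b true))); reflexivity.
    apply (sx _ [] _ [] [neg b true; pos b false] _ _ (gr_rel _ _ _ a b H0)); reflexivity.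
  -
    eapply rst_trans. apply rst_sym.
    apply (sx _ [pos b false; neg a true] _ [] [] _ _ (gr_free _ _ _ (neg b false))); reflexivity.
    eapply rst_trans. apply rst_sym.
    apply (sx _ [pos b false; neg a true; neg b false] _ [] [pos b false] _ _ (gr_rel _ _ _ a b H0)); reflexivity.
    eapply rst_trans.
    apply (sx _ [pos b false; neg a true] _ [] [pos a true; neg b false; pos b true; pos b false] _ _ (gr_free _ _ _ (neg b false))); reflexivity.
    eapply rst_trans.
    apply (sx _ [pos b false] _ [] [neg b false; pos b true; pos b false] _ _ (gr_free _ _ _ (neg a true))); reflexivity.
    apply (sx _ [] _ [] [pos b true; pos b false] _ _ (gr_free _ _ _ (pos b false))); reflexivity.
  -
    apply rst_sym.
    eapply rst_trans. apply rst_sym.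
    apply (sx _ [neg a true; neg b false] _ [] [] _ _ (gr_rel _ _ _ a b H0)); reflexivity.
    eapply rst_trans.
    apply (sx _ [neg a true] _ [] [pos a true; neg b false; pos b true] _ _ (gr_free _ _ _ (neg b false))); reflexivity.
    apply (sx _ [] _ [] [neg b false; pos b true] _ _ (gr_free _ _ _ (neg a true))); reflexivity.
  -
    eapply rst_trans. apply rst_sym.
    apply (sx _ [neg b false] _ [] [neg b true] _ _ (gr_rel _ _ _ a b H0)); reflexivity.
    eapply rst_trans.
    apply (sx _ [] _ [] [pos a true; neg b false; pos b true; neg b true] _ _ (gr_free _ _ _ (neg b false))); reflexivity.
    apply (sx _ [pos a true; neg b false] _ [] [] _ _ (gr_free _ _ _ (pos b true))); reflexivity.
Qed.

Lemma G_rule {A} {blk : A -> nat} {lt} l r : group_rel blk lt l r -> conv (rule blk lt) l r.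
Proof.
  unfold conv. intros H; inversion H; subst.
  - destruct x as [[a [|]] [|]].
    + apply (sx _ [] _ [] [] _ _ (r3 _ _ _ a)); reflexivity.
    + apply (sx _ [] _ [] [] _ _ (r4 _ _ _ a)); reflexivity.
    + apply (sx _ [] _ [] [] _ _ (r1 _ _ _ a)); reflexivity.
    + apply (sx _ [] _ [] [] _ _ (r2 _ _ _ a)); reflexivity.
  - eapply rst_trans.
    apply (sx _ [] _ _ [neg b false; pos b true] _ _ (r5 _ _ _ a b H0)); reflexivity.
    eapply rst_trans.
    apply (sx _ [neg b true] _ _ [pos b true] _ _ (r1 _ _ _ b)); reflexivity.
    apply (sx _ [] _ _ [] _ _ (r4 _ _ _ b)); reflexivity.
Qed.

Theorem mainTheorem8 (A : Type) (blk : A -> nat) (lt : A -> A -> Prop)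
  (HZ : blocks_Z blk lt) :
  terminating (rule blk lt) /\
  locally_confluent (rule blk lt) /\
  confluent (rule blk lt) /\
  (forall w : word A, exists r, conv (rule blk lt) w r /\ terminus (rule blk lt) r /\
      forall r', conv (rule blk lt) w r' -> terminus (rule blk lt) r' -> r' = r) /\
  (forall w : word A, terminus (rule blk lt) w -> freely_reduced w) /\
  (forall w : word A, exists r, same_in_G blk lt w r /\ terminus (rule blk lt) r /\
      forall r', same_in_G blk lt w r' -> terminus (rule blk lt) r' -> r' = r).
Proof.
  split; [apply term|]. split; [apply loc_conf; auto|]. split; [apply newman; auto|].
  split; [intros; apply unique_nf; auto|]. split; [intros; eapply term_fr; eauto|].
  intros w. destruct (unique_nf HZ w) as (r & C & T & U).
  exists r. split; [|split; auto].
  - apply (rst_lift _ _ (@rule_G A blk lt)); auto.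
  - intros r' C' T'. apply U; auto. apply (rst_lift _ _ (@G_rule A blk lt)); auto.
Qed.
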